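(* Let the labels $\{1,\dots,k\}$ be partitioned into $b\ge2$ blocks of sizes $s_1,\dots,s_b$ ($s_1+\dots+s_b=k$), and let $L_{01,b}(i,j)=[i\text{ and }j\text{ are not in the same block}]$ with quadratic surrogate $\Phi_{quad}(f,y)=\frac1{2k}\|f+L_{01,b}(:,y)\|_2^2$. Without constraints on the scores, $$H_{\Phi_{quad},L_{01,b},\mathbb{R}^k}(\varepsilon)=\frac{\varepsilon^2}{4k}\min_{v=1,\dots,b}\frac{2s_v}{s_v+1}\le\frac{\varepsilon^2}{2k},\qquad0\le\varepsilon\le1.$$
   Context: $\mathrm{pred}(f)$ is the smallest index maximizing $f_c$. For $q\in\Delta_k$: $\ell(f,q)=\sum_cq_cL(\mathrm{pred}(f),c)$, $\phi(f,q)=\sum_cq_c\Phi(f,c)$, $\delta\ell(f,q)=\ell(f,q)-\inf_{\hat f\in\mathcal{F}}\ell(\hat f,q)$, $\delta\phi(f,q)=\phi(f,q)-\inf_{\hat f\in\mathcal{F}}\phi(\hat f,q)$; calibration function $H_{\Phi,L,\mathcal{F}}(\varepsilon)=\inf\{\delta\phi(f,q):f\in\mathcal{F},q\in\Delta_k,\delta\ell(f,q)\ge\varepsilon\}$ ($+\infty$ if empty); here $\mathcal{F}=\mathbb{R}^k$. *)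

(* Defs.v *)
From HB Require Import structures.
From mathcomp Require Import all_boot all_order all_algebra.
From mathcomp Require Import all_classical all_reals all_analysis.
Set Implicit Arguments. Unset Strict Implicit. Unset Printing Implicit Defensive.
Import Order.TTheory GRing.Theory Num.Theory.
Local Open Scope ring_scope.
Local Open Scope classical_set_scope.

(* Labels are 'I_m.+1, i.e. k = m.+1 labels {0,...,k-1} (0-based version of {1..k}). *)
Section Defs.
Variable R : realType.
Variable m : nat.
Notation lab := 'I_m.+1.

Definition is_argmax (f : lab -> R) (c : lab) : bool := [forall j, f j <= f c].

(* pred(f): the smallest index maximizing f *)
Definition predf (f : lab -> R) : lab :=
  [arg min_(c < (Order.arg_max ord0 xpredT (fun i => f i)) | is_argmax f c) (c : nat)].

Definition simplex : set (lab -> R) :=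
  [set q | (forall c, 0 <= q c) /\ \sum_(c : lab) q c = 1].

Variable L : lab -> lab -> R.          (* task loss L(prediction, label) *)
Variable Phi : (lab -> R) -> lab -> R.

Definition ell (f : lab -> R) (q : lab -> R) : R := \sum_(c : lab) q c * L (predf f) c.
Definition phi (f : lab -> R) (q : lab -> R) : R := \sum_(c : lab) q c * Phi f c.

(* F = R^k: infimum over all score vectors *)
Definition dell (f q : lab -> R) : R := ell f q - inf [set ell g q | g in [set: lab -> R]].
Definition dphi (f q : lab -> R) : R := phi f q - inf [set phi g q | g in [set: lab -> R]].

(* calibration function; ereal_inf of the empty set is +oo *)
Definition calib (eps : R) : \bar R :=
  ereal_inf [set x : \bar R | exists (f q : lab -> R),
    [/\ simplex q, eps <= dell f q & x = (dphi f q)%:E]].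
End Defs.

Definition L01b (R : realType) (m b : nat) (blk : 'I_m.+1 -> 'I_b)
  (i j : 'I_m.+1) : R := if blk i == blk j then 0 else 1.

Definition Phiquad (R : realType) (m : nat) (L : 'I_m.+1 -> 'I_m.+1 -> R)
  (f : 'I_m.+1 -> R) (y : 'I_m.+1) : R :=
  (2 * m.+1%:R)^-1 * \sum_(c : 'I_m.+1) (f c + L c y) ^+ 2.

Definition blksize (m b : nat) (blk : 'I_m.+1 -> 'I_b) (v : 'I_b) : nat :=
  #|[set i | blk i == v]|.

(* Main.v *)
Require Import Defs.
From HB Require Import structures.
From mathcomp Require Import all_boot all_order all_algebra.
From mathcomp Require Import all_classical all_reals all_analysis.
From mathcomp Require Import ring lra.
Import Order.TTheory GRing.Theory Num.Theory.
Local Open Scope ring_scope.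
Local Open Scope classical_set_scope.

Lemma predf_argmax {R : realType} {m : nat} (f : 'I_m.+1 -> R) :
  forall j, f j <= f (predf f).
Proof.
rewrite /predf.
have H0 : is_argmax f [arg max_(i > ord0) f i]%O.
  case: arg_maxP => // i _ Hi; apply/forallP => j; exact: Hi.
case: arg_minnP => // i /forallP Hi _; exact: Hi.
Qed.

Lemma predf_unique (R : realType) (m : nat) (f : 'I_m.+1 -> R) (c : 'I_m.+1) :
  (forall j, j != c -> f j < f c) -> predf f = c.
Proof.
move=> H; apply/eqP; apply/negPn/negP => Hn.
have := H _ Hn; have := predf_argmax f c.
by rewrite leNgt => /negP.
Qed.
Definition fstar {R : realType} {m : nat} (L : 'I_m.+1 -> 'I_m.+1 -> R)
  (q : 'I_m.+1 -> R) (c : 'I_m.+1) : R := - \sum_y q y * L c y.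

Lemma phi_expand {R : realType} {m : nat} (L : 'I_m.+1 -> 'I_m.+1 -> R)
  (q f : 'I_m.+1 -> R) : \sum_y q y = 1 ->
  phi (Phiquad L) f q = (2 * m.+1%:R)^-1 * \sum_c
    (f c ^+ 2 - 2 * f c * fstar L q c + \sum_y q y * L c y ^+ 2).
Proof.
move=> Hs; rewrite /phi /Phiquad.
under eq_bigr => y _ do rewrite mulrCA.
rewrite -mulr_sumr; congr (_ * _).
under eq_bigr => y _ do rewrite mulr_sumr.
rewrite exchange_big /=; apply: eq_bigr => c _.
have -> : \sum_y q y * (f c + L c y) ^+ 2 =
   \sum_y (f c ^+ 2 * q y + (2 * f c) * (q y * L c y) + q y * L c y ^+ 2).
  by apply: eq_bigr => y _; ring.
rewrite !big_split /= -!mulr_sumr Hs /fstar; ring.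
Qed.

Lemma phi_diff {R : realType} {m : nat} (L : 'I_m.+1 -> 'I_m.+1 -> R)
  (q f : 'I_m.+1 -> R) : \sum_y q y = 1 ->
  phi (Phiquad L) f q - phi (Phiquad L) (fstar L q) q =
  (2 * m.+1%:R)^-1 * \sum_c (f c - fstar L q c) ^+ 2.
Proof.
move=> Hs; rewrite !phi_expand // -mulrBr -sumrB; congr (_ * _).
by apply: eq_bigr => c _; ring.
Qed.

Lemma dphi_eq {R : realType} {m : nat} (L : 'I_m.+1 -> 'I_m.+1 -> R)
  (q f : 'I_m.+1 -> R) : \sum_y q y = 1 ->
  dphi (Phiquad L) f q = (2 * m.+1%:R)^-1 * \sum_c (f c - fstar L q c) ^+ 2.
Proof.
move=> Hs.
have Hge : forall g, phi (Phiquad L) (fstar L q) q <= phi (Phiquad L) g q.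
  move=> g; rewrite -subr_ge0 phi_diff //; apply: mulr_ge0.
    by rewrite invr_ge0 mulr_ge0 // ler0n.
  by apply: sumr_ge0 => c _; exact: sqr_ge0.
rewrite /dphi; set I := inf _.
have -> : I = phi (Phiquad L) (fstar L q) q.
  apply/le_anti/andP; split.
    apply: ge_inf; last by exists (fstar L q).
    by exists (phi (Phiquad L) (fstar L q) q) => _ [g _ <-]; exact: Hge.
  apply: lb_le_inf; first by exists (phi (Phiquad L) (fstar L q) q), (fstar L q).
  by move=> _ [g _ <-]; exact: Hge.
by rewrite phi_diff.
Qed.

Lemma dell_eq {R : realType} {m : nat} (L : 'I_m.+1 -> 'I_m.+1 -> R)
  (q f : 'I_m.+1 -> R) :
  dell L f q = fstar L q (predf (fstar L q)) - fstar L q (predf f).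
Proof.
have Hell : forall g, ell L g q = - fstar L q (predf g).
  by move=> g; rewrite /ell /fstar opprK.
have Hge : forall g, ell L (fstar L q) q <= ell L g q.
  by move=> g; rewrite !Hell lerN2; exact: predf_argmax.
rewrite /dell; set I := inf _.
have -> : I = ell L (fstar L q) q.
  apply/le_anti/andP; split.
    apply: ge_inf; last by exists (fstar L q).
    by exists (ell L (fstar L q) q) => _ [g _ <-]; exact: Hge.
  apply: lb_le_inf; first by exists (ell L (fstar L q) q), (fstar L q).
  by move=> _ [g _ <-]; exact: Hge.
by rewrite !Hell /fstar; ring.
Qed.

Lemma alg1 {R : realType} (S x a d : R) : 0 <= S ->
  S * (d - a) ^+ 2 / (S + 1) <= (x - a) ^+ 2 + S * (d - x) ^+ 2.
Proof.
move=> HS; rewrite ler_pdivrMr; last by lra.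
have := sqr_ge0 ((x - a) - S * (d - x)).
nra.
Qed.

Lemma alg2 {R : realType} (S x a d : R) : 0 <= S -> a <= d -> d <= x ->
  S * (d - a) ^+ 2 / (S + 1) <= (x - a) ^+ 2.
Proof.
move=> HS Had Hdx; rewrite ler_pdivrMr; last by lra.
have : (d - a) ^+ 2 <= (x - a) ^+ 2 by rewrite ler_sqr ?nnegrE; lra.
have := sqr_ge0 (d - a); nra.
Qed.

Lemma fstar_blk {R : realType} {m b : nat} (blk : 'I_m.+1 -> 'I_b) q i j :
  blk i = blk j -> fstar (L01b R blk) q i = fstar (L01b R blk) q j.
Proof. by move=> H; rewrite /fstar /L01b H. Qed.

Lemma sum_blk_const {R : realType} {m b : nat} (blk : 'I_m.+1 -> 'I_b) v (K : R) :
  \sum_(c | blk c == v) K = K *+ blksize blk v.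
Proof.
rewrite /blksize -sumr_const.
apply: eq_bigl => c.
by apply/idP/idP => [H|H]; [apply: mem_set | exact: (set_mem H)].
Qed.

Lemma key_lower {R : realType} {m b : nat} (blk : 'I_m.+1 -> 'I_b) q f :
  let g := fstar (L01b R blk) q in
  let p := predf f in let i0 := predf g in
  blk p != blk i0 ->
  (blksize blk (blk i0))%:R * (g i0 - g p) ^+ 2 / ((blksize blk (blk i0))%:R + 1)
   <= \sum_c (f c - g c) ^+ 2 :> R.
Proof.
move=> g p i0 Hb; set S : R := (blksize blk (blk i0))%:R.
rewrite (bigD1 p) //= (bigID (fun c => blk c == blk i0)) /=.
set A := \sum_(i | _ && _) _. set B := \sum_(i | _ && ~~ _) _.
have HB : 0 <= B by apply: sumr_ge0 => c _; exact: sqr_ge0.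
have HA : A = \sum_(c | blk c == blk i0) (f c - g i0) ^+ 2.
  rewrite /A; apply: eq_big => c.
    case E: (blk c == blk i0); rewrite ?andbF ?andbT //.
    by apply/eqP => Hc; move: Hb; rewrite -Hc (eqP E) eqxx.
  by move=> /andP[_ /eqP Hc]; rewrite /g (fstar_blk _ _ _ _ Hc).
have HS : 0 <= S by rewrite /S ler0n.
have HA0 : 0 <= A by apply: sumr_ge0 => c _; exact: sqr_ge0.
have Had : g p <= g i0 by exact: predf_argmax.
have [Hle|Hlt] := leP (g i0) (f p).
  apply: le_trans (@alg2 R S (f p) (g p) (g i0) HS Had Hle) _.
  by rewrite lerDl addr_ge0.
have HA1 : S * (g i0 - f p) ^+ 2 <= A.
  rewrite HA /S mulr_natl -sum_blk_const; apply: ler_sum => c _.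
  have := predf_argmax f c; rewrite -/p => Hc.
  nra.
apply: le_trans (@alg1 R S (f p) (g p) (g i0) HS) _.
by rewrite lerD2l; lra.
Qed.

Lemma lower_bound {R : realType} {m b : nat} (blk : 'I_m.+1 -> 'I_b)
  (q f : 'I_m.+1 -> R) (eps rmin : R) : \sum_y q y = 1 -> 0 <= eps ->
  eps <= dell (L01b R blk) f q ->
  (forall v, rmin <= 2 * (blksize blk v)%:R / ((blksize blk v)%:R + 1)) ->
  0 <= rmin ->
  eps ^+ 2 / (4 * m.+1%:R) * rmin <= dphi (Phiquad (L01b R blk)) f q.
Proof.
move=> Hs He0 Hdl Hr Hr0.
rewrite dphi_eq // -/(fstar _ q).
rewrite dell_eq in Hdl.
set g := fstar (L01b R blk) q in Hdl *.
set p := predf f in Hdl *. set i0 := predf g in Hdl.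
set T := \sum_c _.
have HT : 0 <= T by apply: sumr_ge0 => c _; exact: sqr_ge0.
have Hk : 0 < (m.+1%:R : R) by rewrite ltr0n.
have Hu : 0 < (2 * m.+1%:R : R)^-1 by rewrite invr_gt0 mulr_gt0.
have -> : eps ^+ 2 / (4 * m.+1%:R) * rmin =
   (2 * m.+1%:R)^-1 * ((eps ^+ 2 * rmin) / 2).
  by field; rewrite gt_eqF.
rewrite ler_pM2l //.
have [->|Hep] := eqVneq eps 0.
  by rewrite expr0n /= !mul0r.
have Hb : blk p != blk i0.
  apply/negP => /eqP H.
  move: Hdl; rewrite /g (fstar_blk _ _ _ _ H) subrr => H0.
  by move: Hep; rewrite eq_le H0 He0.
have Hkey := key_lower blk q f Hb.
rewrite -/g -/p -/i0 in Hkey.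
set S : R := (blksize blk (blk i0))%:R in Hkey.
have HS : 0 <= S by rewrite /S ler0n.
have Hrv := Hr (blk i0); rewrite -/S in Hrv.
set r2 := S / (S + 1).
have Hr2 : 0 <= r2 by rewrite /r2 divr_ge0 // addr_ge0.
have Hkey2 : r2 * (g i0 - g p) ^+ 2 <= T by rewrite /r2 mulrAC.
have Hrv2 : rmin <= 2 * r2 by rewrite /r2 mulrA.
have Heps2 : eps ^+ 2 <= (g i0 - g p) ^+ 2.
  by rewrite ler_sqr ?nnegrE //; lra.
have : eps ^+ 2 * rmin <= (g i0 - g p) ^+ 2 * (2 * r2).
  by apply: ler_pM => //; exact: sqr_ge0.
lra.
Qed.

Lemma alg3 {R : realType} (k S eps dl eta a d t : R) : 1 <= k -> 1 <= S ->
  0 <= eps -> eps <= 1 -> 0 < dl -> dl <= 1 -> dl <= eta / 2 ->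
  a = - ((1 + eps) / 2) -> d = - ((1 - eps) / 2) ->
  t = (a + S * d) / (S + 1) ->
  (2 * k)^-1 * ((t + dl - a) ^+ 2 + S * (t - d) ^+ 2) <=
  eps ^+ 2 / (4 * k) * (2 * S / (S + 1)) + eta.
Proof.
move=> Hk HS He0 He1 Hd0 Hd1 Hde Ha Hd Ht.
have HS1 : S + 1 != 0 by rewrite gt_eqF //; lra.
have Hk0 : k != 0 by rewrite gt_eqF //; lra.
set z := S * eps / (S + 1).
have HX : (t + dl - a) ^+ 2 + S * (t - d) ^+ 2 =
   S * eps ^+ 2 / (S + 1) + dl * (2 * z + dl).
  by rewrite Ht Ha Hd /z; field.
have -> : eps ^+ 2 / (4 * k) * (2 * S / (S + 1)) = (2 * k)^-1 * (S * eps ^+ 2 / (S + 1)).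
  by field; rewrite HS1 Hk0.
rewrite HX mulrDr lerD2l.
have Hz0 : 0 <= z by rewrite /z divr_ge0 ?mulr_ge0 //; lra.
have Hz1 : z <= 1.
  rewrite /z ler_pdivrMr; last by lra.
  nra.
have Hu0 : 0 < (2 * k)^-1 by rewrite invr_gt0; lra.
have Hu1 : (2 * k)^-1 <= 2^-1.
  rewrite lef_pV2 ?posrE; lra.
have H1 : dl * (2 * z + dl) <= 3 * dl by nra.
have H2 : 0 <= dl * (2 * z + dl) by apply: mulr_ge0; lra.
have : (2 * k)^-1 * (dl * (2 * z + dl)) <= 2^-1 * (3 * dl).
  by apply: ler_pM => //; lra.
lra.
Qed.

Lemma blksize_ge1 {R : realType} {m b : nat} (blk : 'I_m.+1 -> 'I_b) (e : 'I_m.+1) :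
  1 <= (blksize blk (blk e))%:R :> R.
Proof.
rewrite -[X in _ <= X]mulr1 mulr_natl -sum_blk_const (bigD1 e) //=.
rewrite lerDl; apply: sumr_ge0 => *; exact: ler01.
Qed.

Lemma upper_construct {R : realType} {m b : nat} (blk : 'I_m.+1 -> 'I_b)
  (c e : 'I_m.+1) (eps eta : R) :
  blk c != blk e -> 0 <= eps -> eps <= 1 -> 0 < eta ->
  exists f q, [/\ simplex q, eps <= dell (L01b R blk) f q &
    dphi (Phiquad (L01b R blk)) f q <=
      eps ^+ 2 / (4 * m.+1%:R) *
       (2 * (blksize blk (blk e))%:R / ((blksize blk (blk e))%:R + 1)) + eta].
Proof.
move=> Hce He0 He1 Heta.
have Hce' : c != e by apply: contraNneq Hce => ->.
set S : R := (blksize blk (blk e))%:R.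
have HS : 1 <= S := @blksize_ge1 R _ _ blk e.
pose q := fun y : 'I_m.+1 => if y == e then (1 + eps) / 2
   else if y == c then (1 - eps) / 2 else 0.
have Hsum : forall h : 'I_m.+1 -> R, \sum_y q y * h y = (1 + eps) / 2 * h e + (1 - eps) / 2 * h c.
  move=> h; rewrite (bigD1 e) //= (bigD1 c) //= big1 ?addr0.
    by rewrite /q eqxx (negbTE Hce') eqxx.
  by move=> y /andP[Hyc Hye]; rewrite /q (negbTE Hyc) (negbTE Hye) mul0r.
have Hq : simplex q.
  split.
    by move=> y; rewrite /q; case: ifP => _; [|case: ifP => _]; lra.
  have := Hsum (fun=> 1); rewrite (eq_bigr q) => [->|y _]; last by rewrite mulr1.
  by rewrite !mulr1; field.
set L := L01b R blk.
set g := fstar L q.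
set a : R := - ((1 + eps) / 2). set d : R := - ((1 - eps) / 2).
have Hg : forall i, g i = if blk i == blk e then d else if blk i == blk c then a else -1.
  move=> i; rewrite /g /fstar Hsum /L /L01b /a /d.
  case: eqP => Hie; case: eqP => Hic //.
  - by move: Hce; rewrite -Hic Hie eqxx.
  - by rewrite mulr0 mulr1 add0r.
  - by rewrite mulr1 mulr0 addr0.
  - by rewrite !mulr1; congr (- _); field.
set t := (a + S * d) / (S + 1).
set dl : R := Num.min 1 (eta / 2).
have Hdl0 : 0 < dl by rewrite /dl lt_min ltr01 /=; lra.
have Hdl1 : dl <= 1 by rewrite /dl ge_min lexx.
have Hdl2 : dl <= eta / 2 by rewrite /dl ge_min lexx orbT.
have Hat : a <= t.
  rewrite /t ler_pdivlMr; last by lra.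
  rewrite /a /d; nra.
have Ha1 : -1 <= a by rewrite /a; lra.
pose f := fun i : 'I_m.+1 => if i == c then t + dl
   else if blk i == blk e then t else g i.
have Hpf : predf f = c.
  apply: predf_unique => j Hjc; rewrite /f eqxx (negbTE Hjc).
  case: ifP => Hje; first lra.
  rewrite Hg Hje; case: ifP => _; lra.
exists f, q; split => //.
  rewrite dell_eq Hpf -/L -/g.
  have := predf_argmax g e.
  rewrite (Hg c) (Hg e) eqxx (negbTE Hce) eqxx.
  rewrite /a /d; lra.
rewrite dphi_eq; last by case: Hq.
rewrite -/L -/g (bigD1 c) //= (bigID (fun i => blk i == blk e)) /=.
rewrite [X in _ + (_ + X)]big1; last first.
  move=> i /andP[Hic Hie]; rewrite /f (negbTE Hic) (negbTE Hie) subrr.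
  by rewrite expr0n.
rewrite addr0.
have -> : \sum_(i | (i != c) && (blk i == blk e)) (f i - g i) ^+ 2 =
    \sum_(i | blk i == blk e) (t - d) ^+ 2.
  apply: eq_big => i.
    case E: (blk i == blk e); rewrite ?andbF ?andbT //.
    by apply/eqP => Hic; move: Hce; rewrite -Hic E.
  move=> /andP[Hic Hie]; rewrite /f (negbTE Hic) Hie Hg Hie //.
rewrite sum_blk_const -[_ *+ blksize _ _]mulr_natl -/S /f eqxx (Hg c) (negbTE Hce) eqxx.
by apply: (@alg3 R m.+1%:R S eps dl eta a d t) => //; rewrite ler1n.
Qed.

Theorem proposition13 (R : realType) (m b : nat) (blk : 'I_m.+1 -> 'I_b)
  (hb : (2 <= b)%N) (hsurj : forall v : 'I_b, exists i, blk i = v)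
  (eps : R) (heps0 : 0 <= eps) (heps1 : eps <= 1) :
  let k : R := m.+1%:R in
  let L := L01b R blk in
  let s (v : 'I_b) : R := (blksize blk v)%:R in
  let mn : \bar R := \big[mine/+oo%E]_(v < b) ((2 * s v) / (s v + 1))%:E in
  calib L (Phiquad L) eps = ((eps ^+ 2 / (4 * k))%:E * mn)%E /\
  ((eps ^+ 2 / (4 * k))%:E * mn <= (eps ^+ 2 / (2 * k))%:E)%E.
Proof.
move=> k L s mn.
pose r (v : 'I_b) : R := 2 * s v / (s v + 1).
have Hr0 : forall v, 0 <= r v.
  by move=> v; rewrite /r /s divr_ge0 ?mulr_ge0 ?addr_ge0 ?ler0n.
have Hr2 : forall v, r v <= 2.
  move=> v; rewrite /r ler_pdivrMr; last by rewrite /s ltr_wpDl ?ler0n.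
  by rewrite mulrDr mulr1 lerDl ler0n.
have [w [Hmn Hw]] : exists w, mn = (r w)%:E /\ forall v, r w <= r v.
  pose w0 : 'I_b := Ordinal (leq_trans (isT : (0 < 2)%N) hb).
  have := @bigmin_eq_arg _ _ _ (+oo%E : \bar R) w0 xpredT (fun v => (r v)%:E) isT
    (fun _ _ => leey _).
  case: arg_minP => // w _ Hw Heq.
  exists w; split; first exact: Heq.
  by move=> v; rewrite -lee_fin; apply: Hw.
rewrite Hmn -EFinM.
split; last first.
  rewrite lee_fin.
  have -> : eps ^+ 2 / (2 * k) = eps ^+ 2 / (4 * k) * 2.
    by field; apply/negP => /eqP H; have : 0 <= m%:R :> R := ler0n _ _; lra.
  apply: ler_wpM2l => //.
  by rewrite divr_ge0 ?sqr_ge0 // mulr_ge0 // /k ler0n.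
pose w0 : 'I_b := Ordinal (leq_trans (isT : (0 < 2)%N) hb).
pose w1 : 'I_b := Ordinal hb.
have [u Huw] : exists u, u != w.
  case: (eqVneq w w0) => Hw0; last by exists w0; rewrite eq_sym.
  by exists w1; rewrite Hw0.
have [c Hc] := hsurj u.
have [e He] := hsurj w.
have Hce : blk c != blk e by rewrite Hc He.
rewrite /calib /L.
apply/le_anti/andP; split.
  apply/lee_addgt0Pr => eta Heta.
  have [f [q [Hq Hd Hp]]] := upper_construct blk c e eps eta Hce heps0 heps1 Heta.
  apply: ge_ereal_inf; exists (dphi (Phiquad (L01b R blk)) f q)%:E.
    by exists f, q; split.
  by rewrite -EFinD lee_fin /r /s /k -He.
apply/ereal_infP => _ [f [q [Hq Hd ->]]].
rewrite lee_fin; apply: lower_bound => //.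
by case: Hq.
Qed.
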